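(* The difference operator $\setminus_F$ of the W3C SPARQL algebra is expressible in the core SPARQL algebra. That is, there is an expression built only from the core operations (projection $\pi_W$, selection $\sigma_F$, join $\Join$, union $\cup$ and simple difference $\setminus$) which, for every selection formula $F$ and all multisets of mappings $\Omega_1,\Omega_2$, evaluates to $\Omega_1 \setminus_F \Omega_2$, with the same multiplicities.
   Context: Fix pairwise disjoint infinite sets $I$ (IRIs), $L$ (literals) and $V$ (variables), and let $T = I \cup L$. Solution mappings. A (solution) mapping is a partial function $\mu : V \to T$ with domain $\operatorname{dom}(\mu)$. Two mappings $\mu_1,\mu_2$ are compatible, written $\mu_1 \sim \mu_2$, if $\mu_1(?X)=\mu_2(?X)$ for every $?X \in \operatorname{dom}(\mu_1)\cap\operatorname{dom}(\mu_2)$; in that case $\mu_1\cup\mu_2$ is again a mapping. Write $\mu_1 \nsim \mu_2$ otherwise. For a set $W\subseteq V$, the restriction $\mu_{|W}$ is the mapping with domain $\operatorname{dom}(\mu)\cap W$ that agrees with $\mu$ there. Selection formulas. The atomic selection formulas are $(?X = c)$, $(?X = ?Y)$ and $\operatorname{bound}(?X)$, for $?X,?Y\in V$ and $c \in I\cup L$. If $F, F'$ are selection formulas, so are $(F\land F')$, $(F\lor F')$ and $\neg(F)$. The value $\mu(F)\in\{\mathit{true},\mathit{false},\mathit{error}\}$ is defined as follows. - $(?X=c)$ is $\mathit{error}$ if $?X\notin\operatorname{dom}(\mu)$; otherwise it is $\mathit{true}$ iff $\mu(?X)=c$, and $\mathit{false}$ otherwise. - $(?X=?Y)$ is $\mathit{error}$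 if $?X$ or $?Y$ is not in $\operatorname{dom}(\mu)$; otherwise it is $\mathit{true}$ iff $\mu(?X)=\mu(?Y)$, and $\mathit{false}$ otherwise. - $\operatorname{bound}(?X)$ is $\mathit{true}$ iff $?X\in\operatorname{dom}(\mu)$, and $\mathit{false}$ otherwise. - $p\land q$ is $\mathit{false}$ if either conjunct is $\mathit{false}$; otherwise it is $\mathit{error}$ if either is $\mathit{error}$; otherwise it is $\mathit{true}$. - $p\lor q$ is $\mathit{true}$ if either disjunct is $\mathit{true}$; otherwise it is $\mathit{error}$ if either is $\mathit{error}$; otherwise it is $\mathit{false}$. - $\neg p$ swaps $\mathit{true}$ and $\mathit{false}$ and maps $\mathit{error}$ to $\mathit{error}$. Multisets. A multiset $\Omega$ of mappings assigns to each mapping $\mu$ a multiplicity $\mathrm{card}_\Omega(\mu)\ge 0$, with $\mu\in\Omega$ iff $\mathrm{card}_\Omega(\mu)>0$. W3C SPARQL algebra. It consists of the following operations, where $\Omega_1,\Omega_2$ are multisets of mappings. - Projection: $\pi_W(\Omega_1)=\{\mu_{|W}\mid \mu\in\Omega_1\}$, where $\mathrm{card}(\mu')=\sum_{\mu:\mu_{|W}=\mu'}\mathrm{card}_{\Omega_1}(\mu)$. - Selection: $\sigma_F(\Omega_1)=\{\mu\in\Omega_1\mid \mu(F)=\mathit{true}\}$, with multiplicities kept. - Join: $\Omega_1\Join\Omega_2=\{\mu_1\cup\mu_2\mid \mu_1\in\Omega_1,\mu_2\in\Omega_2,\mu_1\sim\mu_2\}$, where $\mathrm{card}(\mu)=\sum_{\mu=\mu_1\cup\mu_2}\mathrm{card}_{\Omega_1}(\mu_1)\cdot\mathrm{card}_{\Omega_2}(\mu_2)$.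 - Difference: $\Omega_1\setminus_F\Omega_2=\{\mu_1\in\Omega_1\mid \forall\mu_2\in\Omega_2,\ \mu_1\nsim\mu_2 \lor (\mu_1\sim\mu_2\land(\mu_1\cup\mu_2)(F)=\mathit{false})\}$, with multiplicities as in $\Omega_1$. - Union: $\Omega_1\cup\Omega_2$, with multiplicities added. - Minus: $\Omega_1-\Omega_2=\{\mu_1\in\Omega_1\mid\forall\mu_2\in\Omega_2,\ \mu_1\nsim\mu_2\lor\operatorname{dom}(\mu_1)\cap\operatorname{dom}(\mu_2)=\emptyset\}$, with multiplicities as in $\Omega_1$. - Left-join: $\Omega_1 \,⟕_F\, \Omega_2=\sigma_F(\Omega_1\Join\Omega_2)\cup(\Omega_1\setminus_F\Omega_2)$, with multiplicities added. Simple difference: $\Omega_1\setminus\Omega_2=\{\mu_1\in\Omega_1\mid\forall\mu_2\in\Omega_2,\ \mu_1\nsim\mu_2\}$, with multiplicities as in $\Omega_1$. The core SPARQL algebra consists of projection, selection, join, union and simple difference. An operator $O$ is expressible in an algebra (language) $L$ iff some subset of the operators of $L$ can express the same queries as $O$. *)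

(* Defs.v *)
From mathcomp Require Import all_boot boolp.
Set Implicit Arguments. Unset Strict Implicit. Unset Printing Implicit Defensive.

Section Sparql.
Variables (V T : Type).
(* V = variables, T = I ∪ L (instantiated with a sum type I + L). *)

Definition mapping := V -> option T.

Definition compat (m1 m2 : mapping) : Prop :=
  forall (X : V) (a b : T), m1 X = Some a -> m2 X = Some b -> a = b.
Definition compatb (m1 m2 : mapping) : bool := `[< compat m1 m2 >].

Definition munion (m1 m2 : mapping) : mapping :=
  fun X => match m1 X with Some a => Some a | None => m2 X end.

Definition restrict (W : V -> Prop) (m : mapping) : mapping :=
  fun X => if `[< W X >] then m X else None.

Inductive formula : Type :=
| FEqC  of V & T
| FEqV  of V & V
| FBound of V
| FAnd  of formula & formula
| FOr   of formula & formula
| FNot  of formula.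

Inductive tval : Type := VTrue | VFalse | VError.

Definition tand (p q : tval) : tval :=
  match p, q with
  | VFalse, _ | _, VFalse => VFalse
  | VError, _ | _, VError => VError
  | _, _ => VTrue
  end.
Definition tor (p q : tval) : tval :=
  match p, q with
  | VTrue, _ | _, VTrue => VTrue
  | VError, _ | _, VError => VError
  | _, _ => VFalse
  end.
Definition tnot (p : tval) : tval :=
  match p with VTrue => VFalse | VFalse => VTrue | VError => VError end.

Fixpoint feval (m : mapping) (F : formula) : tval :=
  match F with
  | FEqC X c => match m X with
                | None => VError
                | Some a => if `[< a = c >] then VTrue else VFalse end
  | FEqV X Y => match m X, m Y with
                | Some a, Some b => if `[< a = b >] then VTrue else VFalse
                | _, _ => VError end
  | FBound X => match m X with Some _ => VTrue | None => VFalse end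
  | FAnd F1 F2 => tand (feval m F1) (feval m F2)
  | FOr F1 F2 => tor (feval m F1) (feval m F2)
  | FNot F1 => tnot (feval m F1)
  end.

Definition is_true_val (v : tval) : bool := if v is VTrue then true else false.
Definition is_false_val (v : tval) : bool := if v is VFalse then true else false.

Definition mset := seq mapping.
Definition card (O : mset) (mu : mapping) : nat := count (fun nu => `[< nu = mu >]) O.
Definition meq (O1 O2 : mset) : Prop := forall mu, card O1 mu = card O2 mu.

Definition proj (W : V -> Prop) (O : mset) : mset := map (restrict W) O.
Definition sel (F : formula) (O : mset) : mset :=
  filter (fun mu => is_true_val (feval mu F)) O.
Definition join (O1 O2 : mset) : mset :=
  flatten [seq [seq munion m1 m2 | m2 <- O2 & compatb m1 m2] | m1 <- O1].
Definition munionset (O1 O2 : mset) : mset := O1 ++ O2.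
Definition sdiff (O1 O2 : mset) : mset :=
  filter (fun m1 => all (fun m2 => ~~ compatb m1 m2) O2) O1.
Definition diffF (F : formula) (O1 O2 : mset) : mset :=
  filter (fun m1 => all (fun m2 => ~~ compatb m1 m2 ||
            (compatb m1 m2 && is_false_val (feval (munion m1 m2) F))) O2) O1.

Inductive cexpr : Type :=
| CIn1 | CIn2
| CProj of (V -> Prop) & cexpr
| CSel of formula & cexpr
| CJoin of cexpr & cexpr
| CUnion of cexpr & cexpr
| CSDiff of cexpr & cexpr.

Fixpoint ceval (E : cexpr) (O1 O2 : mset) : mset :=
  match E with
  | CIn1 => O1
  | CIn2 => O2
  | CProj W e => proj W (ceval e O1 O2)
  | CSel F e => sel F (ceval e O1 O2)
  | CJoin e1 e2 => join (ceval e1 O1 O2) (ceval e2 O1 O2)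
  | CUnion e1 e2 => munionset (ceval e1 O1 O2) (ceval e2 O1 O2)
  | CSDiff e1 e2 => sdiff (ceval e1 O1 O2) (ceval e2 O1 O2)
  end.

End Sparql.

Definition infinite_type (A : Type) : Prop := exists f : nat -> A, injective f.

(* Main.v *)
Require Import Defs.
From mathcomp Require Import all_boot boolp.
From Stdlib Require List.

Section Pf.
Variables (V T : Type).
Notation mp := (mapping V T).
Notation fm := (formula V T).

Lemma In_cat A (x : A) (s1 s2 : seq A) :
  List.In x (s1 ++ s2) <-> List.In x s1 \/ List.In x s2.
Proof. elim: s1 => [|y s IH] /=; first by intuition. rewrite IH; intuition. Qed.

Lemma In_filter A (a : pred A) s x : List.In x (filter a s) <-> List.In x s /\ a x.
Proof.
elim: s => [|y s IH] /=; first by intuition.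
case Ha: (a y) => /=; rewrite IH; split.
- by case=> [<-|[]]; auto.
- by case=> [[<-|H] H']; auto.
- by case=> H; auto.
- case=> [[Hy|H] H']; last by auto. by subst; rewrite Ha in H'.
Qed.

Lemma In_map A B (f : A -> B) s y :
  List.In y (map f s) <-> exists x, List.In x s /\ y = f x.
Proof.
elim: s => [|z s IH] /=; first by split=> [[]|[x [[]]]].
rewrite IH; split.
- case=> [<-|[x [H1 H2]]]; [exists z|exists x]; auto.
- case=> x [[<-|H1] H2]; [left|right; exists x]; auto.
Qed.

Lemma allIn A (a : pred A) s : reflect (forall x, List.In x s -> a x) (all a s).
Proof.
elim: s => [|y s IH] /=; first by left.
apply: (iffP andP).
- case=> Hy /IH H x [<-|Hx]; auto.
- move=> H; split; [apply H; left|apply/IH => x Hx; apply H; right]; auto.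
Qed.

Lemma filter_In_ext A (a b : pred A) s :
  (forall x, List.In x s -> a x = b x) -> filter a s = filter b s.
Proof.
elim: s => [|y s IH] //= H.
rewrite H; last by left.
by rewrite IH // => x Hx; apply H; right.
Qed.

Lemma In_join (O1 O2 : mset V T) s : List.In s (join O1 O2) <->
  exists m1 m2, List.In m1 O1 /\ List.In m2 O2 /\ compatb m1 m2 /\ s = munion m1 m2.
Proof.
elim: O1 => [|m O1 IH] /=.
- by split=> [[]|[m1 [m2 [[]]]]].
- rewrite In_cat IH In_map; split.
  + case=> [[m2 [/In_filter [H1 H2] ->]]|[m1 [m2 [H1 H2]]]].
    * exists m, m2; auto.
    * exists m1, m2; auto.
  + case=> m1 [m2 [[<-|H1] [H2 [H3 ->]]]].
    * left; exists m2; split => //; apply/In_filter; auto.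
    * right; exists m1, m2; auto.
Qed.

Fixpoint fvars (F : fm) : seq V :=
  match F with
  | FEqC X _ => [:: X]
  | FEqV X Y => [:: X; Y]
  | FBound X => [:: X]
  | FAnd a b | FOr a b => fvars a ++ fvars b
  | FNot a => fvars a
  end.

Lemma feval_ext F (m m' : mp) :
  (forall x, List.In x (fvars F) -> m x = m' x) -> feval m F = feval m' F.
Proof.
elim: F => [X c|X Y|X|a IHa b IHb|a IHa b IHb|a IHa] /= H.
- by rewrite (H X (or_introl erefl)).
- by rewrite (H X (or_introl erefl)) (H Y (or_intror (or_introl erefl))).
- by rewrite (H X (or_introl erefl)).
- rewrite IHa ?IHb // => x Hx; apply H; apply/In_cat; auto.
- rewrite IHa ?IHb // => x Hx; apply H; apply/In_cat; auto.
- by rewrite IHa.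
Qed.

Fixpoint tr (F : fm) : fm * fm :=
  match F with
  | FEqC X c => (FAnd (FBound T X) (FEqC X c), FOr (FNot (FBound T X)) (FEqC X c))
  | FEqV X Y => (FAnd (FAnd (FBound T X) (FBound T Y)) (FEqV T X Y),
                 FOr (FNot (FAnd (FBound T X) (FBound T Y))) (FEqV T X Y))
  | FBound X => (FBound T X, FBound T X)
  | FAnd a b => (FAnd (tr a).1 (tr b).1, FAnd (tr a).2 (tr b).2)
  | FOr a b => (FOr (tr a).1 (tr b).1, FOr (tr a).2 (tr b).2)
  | FNot a => (FNot (tr a).2, FNot (tr a).1)
  end.

Lemma tr_ok F (m : mp) :
  feval m (tr F).1 = (if feval m F is VTrue then VTrue else VFalse) /\
  feval m (tr F).2 = (if feval m F is VFalse then VFalse else VTrue).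
Proof.
elim: F => [X c|X Y|X|a [A1 A2] b [B1 B2]|a [A1 A2] b [B1 B2]|a [A1 A2]] /=.
- by case: (m X) => [v|] //=; case: (`[< v = c >]).
- by case: (m X) => [v|]; case: (m Y) => [w|] //=; case: (`[< v = w >]).
- by case: (m X).
- rewrite A1 A2 B1 B2; by case: (feval m a); case: (feval m b).
- rewrite A1 A2 B1 B2; by case: (feval m a); case: (feval m b).
- rewrite A1 A2; by case: (feval m a).
Qed.

Lemma is_true_tand p q : is_true_val (tand p q) = is_true_val p && is_true_val q.
Proof. by case: p; case: q. Qed.

Lemma count_split A (a b P : pred A) s :
  count P (filter (fun m => a m && b m) s) + count P (filter (fun m => a m && ~~ b m) s)
  = count P (filter a s).
Proof.
elim: s => [|y s IH] //=.
case: (a y); case: (b y) => /=; rewrite -IH ?addnA //; congr (_ + _); apply: addnC.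
Qed.

Variables (F : fm) (x0 : V).
Let W : V -> Prop := fun x => List.In x (fvars F).

Definition tG (G : fm) (m : mp) : bool := is_true_val (feval m G).

Fixpoint build (vs : seq V) (G : fm) : cexpr V T :=
  match vs with
  | [::] => CSDiff (CSel G (CIn1 V T)) (CSel (tr F).2 (CJoin (CIn2 V T) (CProj W (CSel G (CIn1 V T)))))
  | x :: vs => CUnion (build vs (FAnd G (FBound T x))) (build vs (FAnd G (FNot (FBound T x))))
  end.

Lemma agree (m1 m2 m1' : mp) :
  compat m2 (restrict W m1') -> compat m1 (munion m2 (restrict W m1')) ->
  (forall x, W x -> (m1 x = None <-> m1' x = None)) ->
  compat m1 m2 /\ forall x, W x -> munion m1 m2 x = munion m2 (restrict W m1') x.
Proof.
move=> C2 C1 HD.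
have Cm : compat m1 m2.
  move=> X a b H1 H2; apply: (C1 X a b H1); by rewrite /munion H2.
split => // x Wx.
have Hr : restrict W m1' x = m1' x by rewrite /restrict asboolT.
rewrite /munion.
case E1: (m1 x) => [a|].
- case E1': (m1' x) => [b|]; last by move: (proj2 (HD x Wx) E1'); rewrite E1.
  case E2: (m2 x) => [c|].
  + by rewrite (Cm x a c E1 E2).
  + have := C1 x a b E1; rewrite /munion E2 Hr E1' => h; by rewrite h.
- have := proj1 (HD x Wx) E1; rewrite Hr => ->; by case: (m2 x).
Qed.

Lemma base_ok G (O1 O2 : mset V T) :
  (forall m m', tG G m -> tG G m' -> forall x, W x -> (m x = None <-> m' x = None)) ->
  ceval (build [::] G) O1 O2 = filter (tG G) (diffF F O1 O2).
Proof.
move=> HD /=; rewrite /sdiff /sel /diffF -!filter_predI.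
apply: filter_In_ext => m1 Hm1 /=.
rewrite /predI.
case Hg: (tG G m1); move: (Hg); rewrite /tG => ->; rewrite ?andbF ?andbT //=.
apply/allIn/allIn.
- move=> H m2 Hm2.
  case Hc: (compatb m1 m2) => //=.
  case Hf: (is_false_val (feval (munion m1 m2) F)) => //.
  exfalso.
  have Cm : compat m1 m2 by apply/asboolP.
  have C2 : compat m2 (restrict W m1).
    move=> X a b H1; rewrite /restrict; case: (`[< W X >]) => // H2.
    by symmetry; apply: (Cm X b a H2 H1).
  have C1 : compat m1 (munion m2 (restrict W m1)).
    move=> X a b H1; rewrite /munion; case E2: (m2 X) => [c|].
    - by case=> <-; apply: (Cm X a c H1 E2).
    - rewrite /restrict; case: (`[< W X >]) => //; by rewrite H1; case.
  have [_ Ag] := agree _ _ _ C2 C1 (fun x _ => conj id id).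
  have Hcs : compatb m1 (munion m2 (restrict W m1)) by apply/asboolP.
  move: Hcs; apply/negP.
  apply: H; apply/In_filter; split.
  + apply/In_join; exists m2, (restrict W m1); split => //; split.
    * apply/In_map; exists m1; split => //; apply/In_filter; by split.
    * split => //; by apply/asboolP.
  + rewrite /= (proj2 (tr_ok F _)).
    rewrite -(@feval_ext F (munion m1 m2)); first by move: Hf; case: (feval _ F).
    move=> x Wx; exact: Ag.
- move=> H s /In_filter [/In_join [m2 [nu [Hm2 [/In_map [m1' [/In_filter [Hm1' Hg'] ->]] [Hc ->]]]]] HN].
  apply/negP => /asboolP C1.
  have C2 : compat m2 (restrict W m1') by apply/asboolP.
  have [Cm Ag] := agree _ _ _ C2 C1 (HD m1 m1' Hg Hg').
  have := H m2 Hm2.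
  have -> : compatb m1 m2 by apply/asboolP.
  rewrite /=.
  move: HN; rewrite /= (proj2 (tr_ok F _)).
  rewrite -(@feval_ext F (munion m1 m2)); last by move=> x Wx; exact: Ag.
  by case: (feval (munion m1 m2) F).
Qed.

Lemma build_ok vs G (O1 O2 : mset V T) :
  (forall m m', tG G m -> tG G m' ->
     (forall x, List.In x vs -> (m x = None <-> m' x = None)) ->
     forall x, W x -> (m x = None <-> m' x = None)) ->
  meq (ceval (build vs G) O1 O2) (filter (tG G) (diffF F O1 O2)).
Proof.
elim: vs G => [|x vs IH] G HD.
- rewrite base_ok // => m m' H1 H2; exact: HD.
- have Ec : forall A B (mu : mp), Defs.card (A ++ B) mu = Defs.card A mu + Defs.card B mu.
    by move=> *; exact: count_cat.
  move=> mu /=; rewrite /munionset Ec.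
  rewrite (IH _ _ mu) ?(IH _ _ mu).
  + rewrite /Defs.card -(@count_split _ (tG G) (fun m => is_true_val (feval m (FBound T x)))).
    congr (_ + _); congr count; apply: eq_filter => m;
      rewrite /tG /= is_true_tand //.
    by case: (m x).
  + move=> m m'; rewrite /tG /= !is_true_tand => /andP [g n] /andP [g' n'] Hv.
    apply: (HD m m' g g') => y [<-|Hy]; last by apply Hv.
    by move: n n'; case: (m x) => [?|]; case: (m' x) => [?|] //=; split.
  + move=> m m'; rewrite /tG /= !is_true_tand => /andP [g n] /andP [g' n'] Hv.
    apply: (HD m m' g g') => y [<-|Hy]; last by apply Hv.
    by move: n n'; case: (m x) => [?|]; case: (m' x) => [?|] //=; split.
Qed.

Lemma main_ok (O1 O2 : mset V T) :
  meq (ceval (build (fvars F) (FOr (FBound T x0) (FNot (FBound T x0)))) O1 O2) (diffF F O1 O2).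
Proof.
move=> mu.
rewrite (@build_ok (fvars F) (FOr (FBound T x0) (FNot (FBound T x0))) O1 O2 _ mu);
  last by move=> m m' _ _ H x Wx; apply H.
rewrite /Defs.card; congr count; rewrite -[RHS]filter_predT; apply: eq_filter => m.
by rewrite /tG /=; case: (m x0).
Qed.

End Pf.

Theorem lemma1 (V I L : Type)
  (hV : infinite_type V) (hI : infinite_type I) (hL : infinite_type L)
  (F : formula V (I + L)) :
  exists E : cexpr V (I + L),
    forall O1 O2 : mset V (I + L), meq (ceval E O1 O2) (diffF F O1 O2).
Proof.
case: hV => f _.
exists (@build V (I + L)%type F (@fvars V (I + L)%type F) (FOr (FBound _ (f 0)) (FNot (FBound _ (f 0))))).
move=> O1 O2; exact: (@main_ok V (I + L)%type F (f 0) O1 O2).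
Qed.
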